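(* Let $K$ be a number field and $S$ a finite set of places of $K$ containing all archimedean places such that $\mathcal{O}_S^*$ is infinite and $\mathcal{O}_S$ is a principal ideal domain. Let $X\subset\mathbb{P}^n_K$ be a projective variety over $K$, $L\subset X$ a line over $K$, and $D\subset X$ a proper closed subvariety over $K$. Suppose that $L\cap D$ consists of two $K$-rational points $A$ and $B$ which are $S$-coprime, and that $L_v\cap D_v=\{A_v,B_v\}$ for every finite place $v\notin S$. Then the set $L(K)\cap(X\setminus D)(\mathcal{O}_S)$ is infinite.
   Context: $\mathcal{O}_S=\{x\in K: v(x)\ge0 \text{ for all finite } v\notin S\}$. Reduction: for a closed subvariety $Z\subset\mathbb{P}^n_K$ with radical homogeneous ideal $I$, $Z_v\subset\mathbb{P}^n_{k_v}$ is the zero set of the image of $I\cap\mathcal{O}_v[X_0,\dots,X_n]$ in $k_v[X_0,\dots,X_n]$ ($\mathcal{O}_v$ the valuation ring at the finite place $v$, $\mathfrak{m}_v$ its maximal ideal, $k_v$ its residue field); for $x\in\mathbb{P}^n(K)$, $x_v$ is its reduction. $x\in X(K)$ is an $S$-integral point of $X\setminus D$ if $x_v\notin D_v$ for every finite $v\notin S$. Two points $A,B\in\mathbb{P}^n(K)$ are $S$-coprime if $A_v\ne B_v$ for every finite $v\notin S$. *)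

(* Defs.v *)
From HB Require Import structures.
From mathcomp Require Import all_boot all_order all_algebra all_field.
From mathcomp Require Import mpoly.
From Stdlib Require List.
Set Implicit Arguments. Unset Strict Implicit. Unset Printing Implicit Defensive.
Import Order.TTheory GRing.Theory Num.Theory.
Local Open Scope ring_scope.

(* A number field is a finite-dimensional field extension K of Q:
   K : fieldExtType rat.  Points of P^n are given by coordinate vectors
   'I_n.+1 -> K (nonzero), homogeneous polynomials live in {mpoly K[n.+1]}. *)

Section Defs.
Variable K : fieldType.

(* A finite place v of a number field K is represented by its valuation
   ring O_v: a subring of K, different from K, such that for every
   nonzero x, x \in O_v or x^-1 \in O_v. *)
Definition finite_place (O : pred K) : Prop :=
  [/\ 1 \in O,
      (forall x y, x \in O -> y \in O -> x - y \in O),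
      (forall x y, x \in O -> y \in O -> x * y \in O),
      (forall x, x != 0 -> x \in O \/ x^-1 \in O) &
      (exists x, x \notin O)].

Definition max_ideal (O : pred K) (x : K) : Prop :=
  x \in O /\ (x = 0 \/ x^-1 \notin O).

Definition notin_places (S : seq (pred K)) (O : pred K) : Prop :=
  forall w, List.In w S -> ~ (w =i O).

Definition OS (S : seq (pred K)) (x : K) : Prop :=
  forall O, finite_place O -> notin_places S O -> x \in O.

Definition OS_unit (S : seq (pred K)) (u : K) : Prop :=
  OS S u /\ u != 0 /\ OS S u^-1.

Definition OS_units_infinite (S : seq (pred K)) : Prop :=
  forall s : seq K, exists u, OS_unit S u /\ u \notin s.

Definition OS_ideal (S : seq (pred K)) (I : K -> Prop) : Prop :=
  [/\ (forall x, I x -> OS S x), I 0,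
      (forall x y, I x -> I y -> I (x + y)) &
      (forall r x, OS S r -> I x -> I (r * x))].

Definition OS_PID (S : seq (pred K)) : Prop :=
  forall I, OS_ideal S I ->
    exists2 a, OS S a & forall x, I x <-> exists2 r, OS S r & x = r * a.

Variable n : nat.
Local Notation poly := {mpoly K[n.+1]}.
Local Notation vec := ('I_n.+1 -> K).

Definition homog_component (d : nat) (f : poly) : poly :=
  \sum_(m <- msupp f | mdeg m == d) f@_m *: 'X_[m].

Definition radical_homog_ideal (I : poly -> Prop) : Prop :=
  [/\ I 0,
      (forall f g, I f -> I g -> I (f + g)),
      (forall f g, I f -> I (g * f)),
      (forall f d, I f -> I (homog_component d f)) &
      (forall f k, I (f ^+ k.+1) -> I f)].

(* a closed subvariety of P^n_K, given by its radical homogeneous ideal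
   (a proper ideal: 1 is not in it) *)
Definition closed_subvariety (I : poly -> Prop) : Prop :=
  radical_homog_ideal I /\ ~ I 1.

Definition nonzero_vec (x : vec) : Prop := exists i, x i != 0.

Definition Kpoint (I : poly -> Prop) (x : vec) : Prop :=
  nonzero_vec x /\ forall f, I f -> f.@[x] = 0.

Definition proportional (x y : vec) : Prop :=
  exists2 c : K, c != 0 & forall i, x i = c * y i.

(* The line through a and b (linearly independent): ideal of all
   polynomials vanishing on the K-span of a and b (K is infinite). *)
Definition line_ideal (a b : vec) (f : poly) : Prop :=
  forall s t : K, f.@[fun i => s * a i + t * b i] = 0.

Definition lin_indep2 (a b : vec) : Prop :=
  forall s t : K, (forall i, s * a i + t * b i = 0) -> s = 0 /\ t = 0.

Definition is_line (I : poly -> Prop) : Prop :=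
  exists a b, lin_indep2 a b /\ forall f, I f <-> line_ideal a b f.

(* Geometric intersection: for every field F and embedding phi : K -> F,
   the F-points of Z(I) /\ Z(J) are exactly the images of the given points. *)
Definition geom_intersection_is2 (I J : poly -> Prop) (A B : vec) : Prop :=
  forall (F : fieldType) (phi : {rmorphism K -> F}) (y : 'I_n.+1 -> F),
    (exists i, y i != 0) ->
    (forall f, I f -> (map_mpoly phi f).@[y] = 0) ->
    (forall f, J f -> (map_mpoly phi f).@[y] = 0) ->
    (exists c : F, forall i, y i = c * phi (A i)) \/
    (exists c : F, forall i, y i = c * phi (B i)).

Definition coeffs_in (O : pred K) (f : poly) : Prop :=
  forall m, f@_m \in O.

Definition primitive_rep (O : pred K) (x : vec) : Prop :=
  (forall i, x i \in O) /\ exists i, ~ max_ideal O (x i).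

(* x_v \in Z_v for a primitive representative x:
   every f \in I \cap O_v[X] has f(x) in m_v, i.e. the image of f in
   k_v[X] vanishes at the reduction x_v *)
Definition red_in (O : pred K) (I : poly -> Prop) (x : vec) : Prop :=
  forall f, I f -> coeffs_in O f -> max_ideal O f.@[x].

Definition red_eq (O : pred K) (a b : vec) : Prop :=
  exists c, [/\ c \in O, c != 0, c^-1 \in O &
                forall i, max_ideal O (a i - c * b i)].

Definition red_notin (O : pred K) (I : poly -> Prop) (x : vec) : Prop :=
  forall x', primitive_rep O x' -> proportional x' x -> ~ red_in O I x'.

Definition red_neq (O : pred K) (A B : vec) : Prop :=
  forall a b, primitive_rep O a -> proportional a A ->
              primitive_rep O b -> proportional b B -> ~ red_eq O a b.

(* residue maps O_v -> F onto a field F over k_v (psi is only meaningful on O_v):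
   psi restricted to O_v is a ring morphism with kernel m_v *)
Definition residue_map (O : pred K) (F : fieldType) (psi : K -> F) : Prop :=
  [/\ psi 1 = 1,
      (forall x y, x \in O -> y \in O -> psi (x + y) = psi x + psi y),
      (forall x y, x \in O -> y \in O -> psi (x * y) = psi x * psi y) &
      (forall x, x \in O -> (psi x = 0 <-> max_ideal O x))].

(* L_v \cap D_v = {A_v, B_v} as sets of geometric points: for every field
   F over k_v, the F-points of the reduction of Z(I) /\ Z(J) are exactly
   the reductions of A and B (the inclusion {A_v,B_v} \subset L_v \cap D_v
   is automatic since A, B lie on L and D). *)
Definition red_intersection_is2 (O : pred K) (I J : poly -> Prop) (A B : vec)
  : Prop :=
  forall a b, primitive_rep O a -> proportional a A ->
              primitive_rep O b -> proportional b B ->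
  forall (F : fieldType) (psi : K -> F), residue_map O psi ->
  forall y : 'I_n.+1 -> F, (exists i, y i != 0) ->
    (forall f, I f -> coeffs_in O f -> mmap psi y f = 0) ->
    (forall f, J f -> coeffs_in O f -> mmap psi y f = 0) ->
    (exists c : F, forall i, y i = c * psi (a i)) \/
    (exists c : F, forall i, y i = c * psi (b i)).

Definition S_integral (S : seq (pred K)) (IX ID : poly -> Prop) (x : vec)
  : Prop :=
  Kpoint IX x /\
  forall O, finite_place O -> notin_places S O -> red_notin O ID x.

Definition S_coprime (S : seq (pred K)) (A B : vec) : Prop :=
  forall O, finite_place O -> notin_places S O -> red_neq O A B.

Definition infinite_proj_set (P : vec -> Prop) : Prop :=
  forall s : seq vec, exists x, [/\ P x, nonzero_vec x &
                                   forall y, List.In y s -> ~ proportional x y].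

End Defs.

(* Main.v *)
Require Import Defs.
From HB Require Import structures.
From mathcomp Require Import all_boot all_order all_algebra all_field.
From mathcomp Require Import mpoly ring.
From Stdlib Require List.
From Stdlib Require Import Classical FunctionalExtensionality.
Set Implicit Arguments. Unset Strict Implicit. Unset Printing Implicit Defensive.
Import Order.TTheory GRing.Theory Num.Theory.
Local Open Scope ring_scope.

Section Val.
Variable K : fieldType.
Variable O : pred K.
Hypothesis HO : finite_place O.

Lemma O1 : 1 \in O. Proof. by case: HO. Qed.
Lemma OB x y : x \in O -> y \in O -> x - y \in O. Proof. by case: HO => _ H _ _ _; apply: H. Qed.
Lemma OM x y : x \in O -> y \in O -> x * y \in O. Proof. by case: HO => _ _ H _ _; apply: H. Qed.
Lemma OV x : x != 0 -> x \in O \/ x^-1 \in O. Proof. by case: HO => _ _ _ H _; apply: H. Qed.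
Lemma O0 : 0 \in O. Proof. by rewrite -(subrr 1) OB ?O1. Qed.
Lemma ON x : x \in O -> - x \in O. Proof. by move=> h; rewrite -sub0r OB ?O0. Qed.
Lemma OD x y : x \in O -> y \in O -> x + y \in O.
Proof. by move=> hx hy; rewrite -[y]opprK OB ?ON. Qed.
Lemma Onat k : (k%:R : K) \in O.
Proof. elim: k => [|k IH]; first exact: O0. by rewrite -addn1 natrD OD ?O1. Qed.
Lemma Oint z : (z%:~R : K) \in O.
Proof. case: z => k; first exact: Onat. by rewrite NegzE mulrNz ON ?Onat. Qed.
Lemma OX x k : x \in O -> x ^+ k \in O.
Proof. move=> h; elim: k => [|k IH]; first by rewrite expr0 O1. by rewrite exprS OM. Qed.
Lemma Osum (I : Type) (r : seq I) (P : pred I) (F : I -> K) :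
  (forall i, P i -> F i \in O) -> \sum_(i <- r | P i) F i \in O.
Proof. move=> h; elim/big_rec: _ => [|i x Pi Hx]; [exact: O0| by rewrite OD ?h]. Qed.
Lemma Oprod (I : Type) (r : seq I) (P : pred I) (F : I -> K) :
  (forall i, P i -> F i \in O) -> \prod_(i <- r | P i) F i \in O.
Proof. move=> h; elim/big_rec: _ => [|i x Pi Hx]; [exact: O1| by rewrite OM ?h]. Qed.

Lemma max_idealM x y : max_ideal O x -> y \in O -> max_ideal O (x * y).
Proof.
case=> hx hx0 hy; split; first by rewrite OM.
case: hx0 => [->|hxi]; first by left; rewrite mul0r.
have [->|y0] := eqVneq y 0; first by left; rewrite mulr0.
have [->|x0] := eqVneq x 0; first by left; rewrite mul0r.
right; apply: contra hxi => h.
have -> : x^-1 = y * (x * y)^-1 by rewrite invfM mulrCA divff // mulr1.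
by rewrite OM.
Qed.

Lemma not_max_unit x : x \in O -> ~ max_ideal O x -> x != 0 /\ x^-1 \in O.
Proof.
move=> hx hm; have x0 : x != 0 by apply/eqP => e; apply: hm; split=> //; left.
split=> //; apply/negPn/negP => h; apply: hm; split=> //; right; exact: h.
Qed.

Lemma unit_not_max x : x != 0 -> x^-1 \in O -> ~ max_ideal O x.
Proof. by move=> x0 hxi [_ [e|h]]; [rewrite e eqxx in x0 | rewrite hxi in h]. Qed.

Lemma notO_inv_max x : x \notin O -> max_ideal O x^-1.
Proof.
move=> hx; have x0 : x != 0 by apply: contraNneq hx => ->; exact: O0.
have [h|h] := OV x0; first by rewrite h in hx.
by split=> //; right; rewrite invrK.
Qed.

Lemma max_in x : max_ideal O x -> x \in O. Proof. by case. Qed.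

Lemma max1 : ~ max_ideal O 1.
Proof. by apply: unit_not_max; rewrite ?oner_neq0 // invr1 O1. Qed.

End Val.

Lemma intr_neq0 (K : fieldExtType rat) (z : int) : z != 0 -> (z%:~R : K) != 0.
Proof.
move=> z0; have e : (z%:~R : K) = in_alg K (z%:~R : rat) by rewrite rmorph_int.
by rewrite e fmorph_eq0 intr_eq0.
Qed.

Lemma term_id (R : comNzRingType) (p x D z : R) i j : x * D * z = 1 ->
  p * x^+i * (D^+(i+j).+1 * z^+(i+j)) = (D * p) * (D^+j * z^+j).
Proof.
move=> h; rewrite exprS !exprD.
have -> : p * x ^+ i * (D * (D ^+ i * D ^+ j) * (z ^+ i * z ^+ j)) =
   (D * p) * (D^+j * z^+j) * (x * D * z)^+i.
  rewrite !exprMn. set a := x^+i. set b := D^+i. set c := z^+i. ring.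
by rewrite h expr1n mulr1.
Qed.
Lemma top_id (R : comNzRingType) (x D z : R) k : x * D * z = 1 ->
  x^+k.+1 * (D^+k.+1 * z^+k) = D * x.
Proof.
move=> h; have -> : x^+k.+1 * (D^+k.+1 * z^+k) = D * x * (x * D * z)^+k.
  rewrite !exprS !exprMn. set a := x^+k. set b := D^+k. set c := z^+k. ring.
by rewrite h expr1n mulr1.
Qed.

Lemma denom_lemma (K : fieldExtType rat) (x : K) :
  exists2 d : K, d != 0 & forall O, finite_place O -> d \in O /\ d * x \in O.
Proof.
set p := minPoly 1%VS x.
have hc : forall i, exists q : rat, p`_i == q%:A.
  move=> i; have := minPolyOver 1%VS x; move/polyOverP => /(_ i) /vlineP [q ->].
  by exists q.
pose r i := xchoose (hc i).
have hr : forall i, p`_i = ratr (r i).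
  by move=> i; rewrite -alg_num_field; apply/eqP; exact: (xchooseP (hc i)).
pose Dk : K := \prod_(i < size p) (denq (r i))%:~R.
have Dk0 : Dk != 0 by rewrite prodf_seq_neq0; apply/allP => i _; apply: intr_neq0; exact: denq_neq0.
exists Dk => // O HO.
have DkO : Dk \in O by apply: Oprod => // i _; exact: Oint.
split=> //.
have hDp : forall i, Dk * p`_i \in O.
  move=> i; have [lti|gei] := ltnP i (size p); last first.
    by rewrite nth_default // mulr0 O0.
  rewrite /Dk (bigD1 (Ordinal lti)) //= hr /ratr.
  set P := \prod_(_ < _ | _) _.
  have dn : (denq (r i))%:~R != 0 :> K by apply: intr_neq0; exact: denq_neq0.
  rewrite [X in X \in O](_ : _ = (numq (r i))%:~R * P); last by field.
  by rewrite OM ?Oint //; apply: Oprod => // j _; exact: Oint.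
apply/negPn/negP => hy.
have hz := notO_inv_max HO hy.
set y := Dk * x in hy hz.
have y0 : y != 0 by apply: contraNneq hy => ->; exact: O0.
set z := y^-1 in hz.
have yz : y * z = 1 by rewrite divff.
have zO := max_in hz.
have pm : p \is monic := monic_minPoly 1%VS x.
have px : p.[x] = 0 := minPolyxx 1%VS x.
have sp0 : (0 < size p)%N by rewrite lt0n size_poly_eq0 monic_neq0.
have lc : p`_(size p).-1 = 1 by have := monicP pm.
move: px; rewrite horner_coef.
case ek : (size p) sp0 lc => [//|[|k]] _ lc.
  by rewrite big_ord1 /= expr0 mulr1 lc => /eqP; rewrite oner_eq0.
rewrite big_ord_recr /= => px.
have xdz : x * Dk * z = 1 by rewrite (mulrC x) yz.
have e0 : 0 = (\sum_(i < k.+1) p`_i * x ^+ i + p`_k.+1 * x ^+ k.+1) * (Dk^+k.+1 * z^+k)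
  by rewrite px mul0r.
rewrite mulrDl big_distrl /= lc mul1r top_id // in e0.
have : y = - \sum_(i < k.+1) (Dk * p`_i) * (Dk ^+ (k - i) * z ^+ (k - i)).
  apply/eqP; rewrite -subr_eq0 opprK addrC; apply/eqP; rewrite [in RHS]e0; congr (_ + _).
  apply: eq_bigr => i _; have hi : k = (i + (k - i))%N by rewrite subnKC // -ltnS.
  have t := @term_id _ p`_i x Dk z i (k - i) xdz; rewrite -hi in t; by rewrite t.
move=> ey; move: hy; rewrite ey ON //; apply: Osum => // i _.
by rewrite OM // OM // OX.
Qed.

Section OSlemmas.
Variable K : fieldType.
Variable S : seq (pred K).

Lemma OS_all x : (forall O, finite_place O -> x \in O) -> OS S x.
Proof. by move=> h O HO _; apply: h. Qed.
Lemma OS_B x y : OS S x -> OS S y -> OS S (x - y).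
Proof. by move=> hx hy O HO HS; apply: OB => //; [apply: hx|apply: hy]. Qed.
Lemma OS_M x y : OS S x -> OS S y -> OS S (x * y).
Proof. by move=> hx hy O HO HS; apply: OM => //; [apply: hx|apply: hy]. Qed.
Lemma OS_D x y : OS S x -> OS S y -> OS S (x + y).
Proof. by move=> hx hy O HO HS; apply: OD => //; [apply: hx|apply: hy]. Qed.
Lemma OS_0 : OS S 0. Proof. by move=> O HO _; exact: O0. Qed.
Lemma OS_1 : OS S 1. Proof. by move=> O HO _; exact: O1. Qed.
Lemma OS_sum (I : Type) (r : seq I) (P : pred I) (F : I -> K) :
  (forall i, P i -> OS S (F i)) -> OS S (\sum_(i <- r | P i) F i).
Proof. move=> h; elim/big_rec: _ => [|i x Pi Hx]; [exact: OS_0| by apply: OS_D => //; apply: h]. Qed.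
End OSlemmas.

Lemma common_denom (K : fieldExtType rat) n (A : 'I_n.+1 -> K) (s : seq 'I_n.+1) :
  exists2 d : K, d != 0 & forall O, finite_place O -> d \in O /\ forall i, i \in s -> d * A i \in O.
Proof.
elim: s => [|j s [d d0 IH]]; first by exists 1 => [|O HO]; rewrite ?oner_eq0 ?O1.
have [e e0 He] := denom_lemma (A j).
exists (d * e) => [|O HO]; first by rewrite mulf_neq0.
have [dO hd] := IH O HO; have [eO he] := He O HO.
split; first by rewrite OM.
move=> i; rewrite inE => /orP [/eqP ->|hi].
  by rewrite -mulrA OM.
by rewrite mulrAC OM // hd.
Qed.

Lemma normalize (K : fieldExtType rat) n (S : seq (pred K)) (A : 'I_n.+1 -> K) :
  OS_PID S -> nonzero_vec A ->
  exists l : K, [/\ l != 0, (forall i, OS S (l * A i)) &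
    exists r : 'I_n.+1 -> K, (forall i, OS S (r i)) /\ \sum_i r i * (l * A i) = 1].
Proof.
move=> PID [j Aj].
have [d d0 Hd] := common_denom A (enum 'I_n.+1).
pose B i := d * A i.
have HB : forall i, OS S (B i).
  by move=> i; apply: OS_all => O HO; have [_ h] := Hd O HO; apply: h; rewrite mem_enum.
pose I x := exists r : 'I_n.+1 -> K, (forall i, OS S (r i)) /\ x = \sum_i r i * B i.
have HI : OS_ideal S I.
  split.
  - by move=> x [r [hr ->]]; apply: OS_sum => i _; apply: OS_M.
  - by exists (fun _ => 0); split=> [i|]; [exact: OS_0| rewrite big1 // => i _; rewrite mul0r].
  - move=> x y [r [hr ->]] [r' [hr' ->]]; exists (fun i => r i + r' i); split.
      by move=> i; apply: OS_D.
    by rewrite -big_split; apply: eq_bigr => i _; rewrite mulrDl.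
  - move=> t x ht [r [hr ->]]; exists (fun i => t * r i); split.
      by move=> i; apply: OS_M.
    by rewrite mulr_sumr; apply: eq_bigr => i _; rewrite mulrA.
have [g gO Hg] := PID I HI.
have IB : forall i, I (B i).
  move=> i; exists (fun k => if k == i then 1 else 0); split.
    by move=> k; case: eqP => _; [exact: OS_1| exact: OS_0].
  rewrite (bigD1 i) //= eqxx mul1r big1 ?addr0 // => k /negPf ->; by rewrite mul0r.
have g0 : g != 0.
  have [t _ et] := (Hg (B j)).1 (IB j).
  by apply: contraNneq (mulf_neq0 d0 Aj) => g0; rewrite /B in et; rewrite et g0 mulr0.
exists (d / g); split.
- by rewrite mulf_neq0 // invr_eq0.
- move=> i; have [t tO et] := (Hg (B i)).1 (IB i).
  by rewrite mulrAC -/(B i) et mulfK.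
- have [r [hr er]] : I g by apply/Hg; exists 1; [exact: OS_1| rewrite mul1r].
  exists r; split => //.
  apply: (mulIf g0); rewrite mul1r [in RHS]er mulr_suml; apply: eq_bigr => i _.
  by rewrite -mulrA mulrAC -/(B i) mulfVK.
Qed.

Module ResidueMod.
Local Open Scope quotient_scope.

Section Residue.
Variable K : fieldType.
Variable O : pred K.
Hypothesis HO : finite_place O.

Definition Osub := {x : K | x \in O}.
HB.instance Definition _ := Choice.on Osub.

Definition ozero : Osub := exist _ 0 (O0 HO).
Definition oone : Osub := exist _ 1 (O1 HO).
Definition oadd (x y : Osub) : Osub := exist _ (val x + val y) (OD HO (valP x) (valP y)).
Definition oopp (x : Osub) : Osub := exist _ (- val x) (ON HO (valP x)).
Definition omul (x y : Osub) : Osub := exist _ (val x * val y) (OM HO (valP x) (valP y)).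

Lemma oaddA : associative oadd. Proof. by move=> x y z; apply: val_inj; rewrite /= addrA. Qed.
Lemma oaddC : commutative oadd. Proof. by move=> x y; apply: val_inj; rewrite /= addrC. Qed.
Lemma oadd0 : left_id ozero oadd. Proof. by move=> x; apply: val_inj; rewrite /= add0r. Qed.
Lemma oaddN : left_inverse ozero oopp oadd. Proof. by move=> x; apply: val_inj; rewrite /= addNr. Qed.
HB.instance Definition _ := GRing.isZmodule.Build Osub oaddA oaddC oadd0 oaddN.
Lemma omulA : associative omul. Proof. by move=> x y z; apply: val_inj; rewrite /= mulrA. Qed.
Lemma omulC : commutative omul. Proof. by move=> x y; apply: val_inj; rewrite /= mulrC. Qed.
Lemma omul1 : left_id oone omul. Proof. by move=> x; apply: val_inj; rewrite /= mul1r. Qed.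
Lemma omulDl : left_distributive omul oadd. Proof. by move=> x y z; apply: val_inj; rewrite /= mulrDl. Qed.
Lemma oone0 : oone != 0. Proof. by apply/eqP => /(congr1 val) /= /eqP; rewrite oner_eq0. Qed.
HB.instance Definition _ := GRing.Zmodule_isComNzRing.Build Osub omulA omulC omul1 omulDl oone0.

Lemma val_add (x y : Osub) : val (x + y) = val x + val y. Proof. by []. Qed.
Lemma val_mul (x y : Osub) : val (x * y) = val x * val y. Proof. by []. Qed.
Lemma val_one : val (1 : Osub) = 1. Proof. by []. Qed.
Lemma val_zero : val (0 : Osub) = 0. Proof. by []. Qed.

Definition mI : pred Osub := fun x => (val x == 0) || ((val x)^-1 \notin O).

Lemma mI_max (x : Osub) : (x \in mI) <-> max_ideal O (val x).
Proof.
rewrite /max_ideal unfold_in /mI; split.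
  by case/orP => [/eqP h|h]; split; rewrite ?(valP x) //; [left|right].
by case=> _ [->|h]; rewrite ?eqxx // h orbT.
Qed.

Lemma max_add x y : max_ideal O x -> max_ideal O y -> max_ideal O (x + y).
Proof.
move=> hx hy.
have [->|x0] := eqVneq x 0; first by rewrite add0r.
have [->|y0] := eqVneq y 0; first by rewrite addr0.
have [h|h] := OV HO (mulf_neq0 y0 (invr_neq0 x0)).
  have -> : x + y = x * (1 + y / x) by rewrite mulrDr mulr1 mulrCA divff // mulr1.
  by apply: max_idealM => //; rewrite OD // O1.
have -> : x + y = y * (x / y + 1).
  by rewrite mulrDr mulr1 mulrCA divff // mulr1.
apply: max_idealM => //; rewrite OD // ?O1 //.
by rewrite invfM invrK mulrC in h.
Qed.

Lemma mI_ideal : idealr_closed mI.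
Proof.
split.
- by rewrite unfold_in /mI /= eqxx.
- by rewrite unfold_in /mI /= oner_eq0 invr1 O1.
- move=> a u v /mI_max hu /mI_max hv; apply/mI_max.
  rewrite val_add val_mul mulrC; apply: max_add => //; apply: max_idealM => //; exact: (valP a).
Qed.

HB.instance Definition _ := isIdealr.Build Osub mI mI_ideal.

Definition mIr : idealr Osub := mI.
Local Notation Q := {ideal_quot mIr}.

Definition qinv (q : Q) : Q := \pi_Q (insubd (0 : Osub) (val (repr q))^-1).

Lemma pi0 (x : Osub) : (\pi_Q x == 0) = (x \in mI).
Proof. by rewrite -(rmorph0 (\pi_Q : Osub -> Q)) piE Quotient.equivE subr0. Qed.

Lemma qmulVf (q : Q) : q != 0 -> qinv q * q = 1.
Proof.
rewrite /qinv -{1 3}[q]reprK; set x := repr q.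
rewrite pi0 => hx.
have : ~ max_ideal O (val x) by move/mI_max; apply/negP.
case/(not_max_unit (valP x)) => x0 xi.
rewrite -rmorphM -(rmorph1 (\pi_Q : Osub -> Q)); congr (\pi_Q _).
by apply: val_inj; rewrite val_mul insubdK // mulVf.
Qed.

Lemma qinv0 : qinv 0 = 0.
Proof.
rewrite /qinv; apply/eqP; rewrite pi0.
have : repr (0 : Q) \in mI by rewrite -pi0 reprK.
rewrite unfold_in /mI => /orP [/eqP ->|h].
  by rewrite invr0 insubdK ?O0 // unfold_in /mI eqxx.
by rewrite /insubd insubN // unfold_in /mI eqxx.
Qed.

HB.instance Definition _ := GRing.ComNzRing_isField.Build Q qmulVf qinv0.

Definition psi (x : K) : Q := \pi_Q (insubd (0 : Osub) x).

Lemma psi_residue : residue_map O psi.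
Proof.
split.
- rewrite /psi -(rmorph1 (\pi_Q : Osub -> Q)); congr (\pi_Q _).
  by apply: val_inj; rewrite insubdK ?O1.
- move=> x y hx hy; rewrite /psi -rmorphD; congr (\pi_Q _).
  by apply: val_inj; rewrite val_add !insubdK // OD.
- move=> x y hx hy; rewrite /psi -rmorphM; congr (\pi_Q _).
  by apply: val_inj; rewrite val_mul !insubdK // OM.
- move=> x hx; rewrite /psi; split.
    by move/eqP; rewrite pi0 => /mI_max; rewrite insubdK.
  by move=> h; apply/eqP; rewrite pi0; apply/mI_max; rewrite insubdK.
Qed.

End Residue.

Lemma residue_exists (K : fieldType) (O : pred K) : finite_place O ->
  exists (F : fieldType) (ps : K -> F), residue_map O ps.
Proof. by move=> HO; exists {ideal_quot (mIr HO)}; exists (psi HO); exact: psi_residue. Qed.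
End ResidueMod.
Import ResidueMod.

Section PsiLemmas.
Variable K : fieldType.
Variable O : pred K.
Hypothesis HO : finite_place O.
Variable F : fieldType.
Variable psi : K -> F.
Hypothesis Hpsi : residue_map O psi.

Lemma psi1 : psi 1 = 1. Proof. by case: Hpsi. Qed.
Lemma psiD x y : x \in O -> y \in O -> psi (x + y) = psi x + psi y.
Proof. by case: Hpsi => _ h _ _; apply: h. Qed.
Lemma psiM x y : x \in O -> y \in O -> psi (x * y) = psi x * psi y.
Proof. by case: Hpsi => _ _ h _; apply: h. Qed.
Lemma psi0iff x : x \in O -> (psi x = 0 <-> max_ideal O x).
Proof. by case: Hpsi => _ _ _ h; apply: h. Qed.
Lemma psi0 : psi 0 = 0.
Proof. by apply/psi0iff; [exact: O0 | split; [exact: O0| left]]. Qed.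
Lemma psiN x : x \in O -> psi (- x) = - psi x.
Proof.
move=> hx; apply/eqP; rewrite -addr_eq0 -psiD ?ON //.
by rewrite addNr psi0.
Qed.
Lemma psiB x y : x \in O -> y \in O -> psi (x - y) = psi x - psi y.
Proof. by move=> hx hy; rewrite psiD ?ON // psiN. Qed.
Lemma psiX x k : x \in O -> psi (x ^+ k) = psi x ^+ k.
Proof.
move=> hx; elim: k => [|k IH]; first by rewrite !expr0 psi1.
by rewrite !exprS psiM ?OX // IH.
Qed.
Lemma psi_sum (I : Type) (r : seq I) (P : pred I) (G : I -> K) :
  (forall i, P i -> G i \in O) -> psi (\sum_(i <- r | P i) G i) = \sum_(i <- r | P i) psi (G i).
Proof.
move=> h; elim: r => [|i r IH]; first by rewrite !big_nil psi0.
rewrite !big_cons; case: ifP => Pi //.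
by rewrite psiD ?h // ?IH //; apply: Osum.
Qed.
Lemma psi_prod (I : Type) (r : seq I) (P : pred I) (G : I -> K) :
  (forall i, P i -> G i \in O) -> psi (\prod_(i <- r | P i) G i) = \prod_(i <- r | P i) psi (G i).
Proof.
move=> h; elim: r => [|i r IH]; first by rewrite !big_nil psi1.
rewrite !big_cons; case: ifP => Pi //.
by rewrite psiM ?h // ?IH //; apply: Oprod.
Qed.

Lemma psi_meval n (f : {mpoly K[n.+1]}) (x : 'I_n.+1 -> K) :
  coeffs_in O f -> (forall i, x i \in O) -> psi f.@[x] = mmap psi (fun i => psi (x i)) f.
Proof.
move=> hf hx; rewrite mevalE /mmap psi_sum; last first.
  by move=> m _; apply: OM => //; apply: Oprod => // i _; apply: OX.
apply: eq_bigr => m _; rewrite psiM //; last by apply: Oprod => // i _; apply: OX.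
by rewrite psi_prod /mmap1; [congr (_ * _); apply: eq_bigr => i _; rewrite psiX | move=> i _; apply: OX].
Qed.

Lemma psi_neq0 x : x \in O -> ~ max_ideal O x -> psi x != 0.
Proof. by move=> hx hm; apply/eqP => /(psi0iff hx). Qed.

Lemma psi_red_eq n (a b : 'I_n.+1 -> K) (e : F) :
  primitive_rep O a -> primitive_rep O b -> (forall i, psi (a i) = e * psi (b i)) ->
  red_eq O a b.
Proof.
move=> [ha [j ja]] [hb [k kb]] he.
have [b0 bi] := not_max_unit (hb k) kb.
pose c := a k * (b k)^-1.
have cO : c \in O by rewrite OM.
have pc : psi c = e.
  have := psiM (ha k) bi; rewrite -/c he => ->.
  by rewrite -mulrA -psiM // ?hb // mulfV // psi1 mulr1.
have e0 : e != 0.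
  apply/eqP => e0; apply: ja; apply/(psi0iff (ha j)); by rewrite he e0 mul0r.
have [c0 ci] : c != 0 /\ c^-1 \in O.
  apply: not_max_unit => //; move/(psi0iff cO); rewrite pc; exact/eqP.
exists c; split => // i; apply/(psi0iff _).
  by rewrite OB // OM.
by rewrite psiB ?OM // psiM // pc he subrr.
Qed.
End PsiLemmas.

Lemma meval_lin (K : fieldType) n (c v : 'I_n.+1 -> K) :
  (\sum_i c i *: 'X_i : {mpoly K[n.+1]}).@[v] = \sum_i c i * v i.
Proof.
rewrite (big_morph (meval v) (mevalD v) (meval0 v)); apply: eq_bigr => i _.
by rewrite mevalZ mevalXU.
Qed.

Lemma in_span (K : fieldType) n (p q y : 'I_n.+1 -> K) :
  (forall f : {mpoly K[n.+1]}, line_ideal p q f -> f.@[y] = 0) ->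
  exists s t, forall i, y i = s * p i + t * q i.
Proof.
move=> H.
pose M : 'M[K]_(2, n.+1) := \matrix_(i < 2, j < n.+1) (if i == 0 then p j else q j).
pose yr : 'rV[K]_(n.+1) := \row_(j < n.+1) y j.
have [/submxP [D eD]|nsub] := boolP (yr <= M)%MS.
  exists (D 0 0), (D 0 1) => i.
  have := congr1 (fun A : 'rV_(n.+1) => A 0 i) eD; rewrite /= !mxE !big_ord_recr big_ord0 /= !mxE /= add0r.
  by move=> ->; congr (D 0 _ * _ + D 0 _ * _); exact: val_inj.
exfalso; move: nsub; rewrite submxE => /matrix0Pn [i0 [j hj]].
pose C := cokermx M.
pose f : {mpoly K[n.+1]} := \sum_i C i j *: 'X_i.
have : f.@[y] = 0.
  apply: H => s t; rewrite meval_lin.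
  have hM := mulmx_coker M.
  have e0 : \sum_i C i j * p i = 0.
    have := congr1 (fun A : 'M_(2, n.+1) => A 0 j) hM; rewrite /= [in RHS]mxE => h0; rewrite -[RHS]h0 mxE.
    by apply: eq_bigr => i _; rewrite !mxE /= mulrC.
  have e1 : \sum_i C i j * q i = 0.
    have := congr1 (fun A : 'M_(2, n.+1) => A 1 j) hM; rewrite /= [in RHS]mxE => h0; rewrite -[RHS]h0 mxE.
    by apply: eq_bigr => i _; rewrite !mxE /= mulrC.
  have -> : \sum_i C i j * (s * p i + t * q i) = s * (\sum_i C i j * p i) + t * (\sum_i C i j * q i).
    rewrite !mulr_sumr -big_split; apply: eq_bigr => i _ /=; ring.
  by rewrite e0 e1 !mulr0 addr0.
rewrite meval_lin => h; move: hj; rewrite !mxE (ord1 i0).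
have -> : \sum_j0 yr 0 j0 * cokermx M j0 j = \sum_i C i j * y i.
  by apply: eq_bigr => i _; rewrite mxE mulrC.
by rewrite h eqxx.
Qed.

Lemma uniq_param (K : fieldType) n (a b y : 'I_n.+1 -> K) u u0 :
  lin_indep2 a b ->
  proportional (fun i => a i + u * b i) y -> proportional (fun i => a i + u0 * b i) y -> u = u0.
Proof.
move=> hab [c c0 hc] [c' c'0 hc'].
have := hab (c' - c) (c' * u - c * u0).
case.
  move=> i; have e1 := hc i; have e2 := hc' i.
  have -> : (c' - c) * a i + (c' * u - c * u0) * b i = c' * (a i + u * b i) - c * (a i + u0 * b i) by ring.
  by rewrite e1 e2 mulrCA subrr.
move=> /eqP; rewrite subr_eq0 => /eqP ec /eqP; rewrite ec subr_eq0 => /eqP.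
by move/(mulfI c0).
Qed.

Lemma avoid_list (K : fieldType) n (a b : 'I_n.+1 -> K) (s : seq ('I_n.+1 -> K)) :
  lin_indep2 a b ->
  exists L : seq K, forall u, u \notin L -> forall y, List.In y s -> ~ proportional (fun i => a i + u * b i) y.
Proof.
move=> hab; elim: s => [|y s [L HL]]; first by exists [::].
have [[u0 hu0]|hno] := classic (exists u0, proportional (fun i => a i + u0 * b i) y).
  exists (u0 :: L) => u; rewrite inE negb_or => /andP [hu huL] z [<-|hz].
    by move=> hp; move: hu; rewrite (uniq_param hab hp hu0) eqxx.
  exact: HL.
exists L => u huL z [<-|hz]; last exact: HL.
by move=> hp; apply: hno; exists u.
Qed.

Lemma indep_nonzero (K : fieldType) n (a b : 'I_n.+1 -> K) u :
  lin_indep2 a b -> nonzero_vec (fun i => a i + u * b i).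
Proof.
move=> hab; apply: NNPP => hn.
have := hab 1 u; case.
  move=> i; rewrite mul1r; apply/eqP; apply/negPn/negP => h; apply: hn; by exists i.
by move=> /eqP; rewrite oner_eq0.
Qed.

Lemma infinite_gen (K : fieldType) n (S : seq (pred K)) (a b : 'I_n.+1 -> K)
  (P : ('I_n.+1 -> K) -> Prop) :
  OS_units_infinite S -> lin_indep2 a b ->
  (forall u, OS_unit S u -> P (fun i => a i + u * b i)) ->
  infinite_proj_set P.
Proof.
move=> Hu hab HP s; have [L HL] := avoid_list s hab.
have [u [hu huL]] := Hu L.
exists (fun i => a i + u * b i); split.
- exact: HP.
- exact: indep_nonzero.
- exact: HL.
Qed.

Lemma on_line (K : fieldType) n (IL : {mpoly K[n.+1]} -> Prop) (p q x : 'I_n.+1 -> K) s t :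
  (forall f, IL f <-> line_ideal p q f) -> (forall i, x i = s * p i + t * q i) ->
  forall f, IL f -> f.@[x] = 0.
Proof.
move=> HL hx f hf; have -> : x = (fun i => s * p i + t * q i) by apply: functional_extensionality.
exact: ((HL f).1 hf s t).
Qed.

Lemma prim_of_sum (K : fieldType) n (S : seq (pred K)) (a r : 'I_n.+1 -> K) O :
  finite_place O -> notin_places S O ->
  (forall i, OS S (a i)) -> (forall i, OS S (r i)) -> \sum_i r i * a i = 1 ->
  primitive_rep O a.
Proof.
move=> HO HS ha hr hs; split; first by move=> i; apply: ha.
apply: NNPP => hn.
have hm : forall i, max_ideal O (a i).
  by move=> i; apply: NNPP => h; apply: hn; exists i.
apply: (max1 HO); rewrite -hs.
elim/big_rec: _ => [|i x _ hx]; first by split; [exact: O0| left].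
apply: max_add => //; rewrite mulrC; apply: max_idealM => //; exact: hr.
Qed.

Lemma prop_red_eq (K : fieldType) n (O : pred K) (a b : 'I_n.+1 -> K) c :
  finite_place O -> primitive_rep O a -> primitive_rep O b -> c != 0 ->
  (forall i, a i = c * b i) -> red_eq O a b.
Proof.
move=> HO [ha [j ja]] [hb [k kb]] c0 hc.
have cO : c \in O.
  apply/negPn/negP => hc'; have hm := notO_inv_max HO hc'.
  apply: kb; have -> : b k = c^-1 * a k by rewrite hc mulrA mulVf // mul1r.
  exact: max_idealM.
have ciO : c^-1 \in O.
  apply/negPn/negP => hc'; apply: ja; rewrite hc; apply: max_idealM => //.
  by split=> //; right.
exists c; split => // i; rewrite hc subrr; by split; [exact: O0| left].
Qed.

Unset Implicit Arguments.

Theorem proposition3p1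
  (K : fieldExtType rat) (n : nat) (S : seq (pred K))
  (IX IL ID : {mpoly K[n.+1]} -> Prop) (A B : 'I_n.+1 -> K) :
  (forall w, List.In w S -> finite_place w) ->
  OS_units_infinite S ->
  OS_PID S ->
  closed_subvariety IX ->
  closed_subvariety IL -> is_line IL -> (forall f, IX f -> IL f) ->
  closed_subvariety ID -> (forall f, IX f -> ID f) -> ~ (forall f, ID f -> IX f) ->
  Kpoint IL A -> Kpoint ID A -> Kpoint IL B -> Kpoint ID B ->
  geom_intersection_is2 IL ID A B ->
  S_coprime S A B ->
  (forall O, finite_place O -> notin_places S O ->
     red_intersection_is2 O IL ID A B) ->
  infinite_proj_set (fun x => Kpoint IL x /\ S_integral S IX ID x).
Proof.
move=> _ Hu PID _ _ [p [q [pq HLpq]]] XL _ _ _ LA _ LB _ _ cop redI.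
have [s1 [t1 eA]] : exists s t, forall i, A i = s * p i + t * q i.
  by apply: in_span => f hf; apply: LA.2; apply/(HLpq f).
have [s2 [t2 eB]] : exists s t, forall i, B i = s * p i + t * q i.
  by apply: in_span => f hf; apply: LB.2; apply/(HLpq f).
have [[W0 [HO0 HS0]]|noplace] := classic (exists W, finite_place W /\ notin_places S W); last first.
  apply: (infinite_gen Hu pq) => u hu.
  have Lx : forall f, IL f -> meval (fun i => p i + u * q i) f = 0.
    by apply: (@on_line _ _ _ _ _ _ 1 u HLpq) => i; rewrite mul1r.
  have nz := indep_nonzero u pq.
  split; first by split.
  split; first by split => // f /XL; apply: Lx.
  by move=> O HO HS; exfalso; apply: noplace; exists O.
have [l1 [l10 ha [r1 [hr1 hs1]]]] := normalize PID LA.1.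
have [l2 [l20 hb [r2 [hr2 hs2]]]] := normalize PID LB.1.
pose a i := l1 * A i. pose b i := l2 * B i.
have prima : forall O, finite_place O -> notin_places S O -> primitive_rep O a.
  by move=> O HO HS; exact: (prim_of_sum HO HS ha hr1 hs1).
have primb : forall O, finite_place O -> notin_places S O -> primitive_rep O b.
  by move=> O HO HS; exact: (prim_of_sum HO HS hb hr2 hs2).
have propa : proportional a A by exists l1.
have propb : proportional b B by exists l2.
have nred : forall O, finite_place O -> notin_places S O -> ~ red_eq O a b.
  by move=> O HO HS; exact: (cop O HO HS a b (prima O HO HS) propa (primb O HO HS) propb).
have b_nz : ~ (forall i, b i = 0).
  move=> h; have [_ [j hj]] := primb W0 HO0 HS0; apply: hj; rewrite h.
  by split; [exact: (O0 HO0)| left].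
have a_nz : ~ (forall i, a i = 0).
  move=> h; have [_ [j hj]] := prima W0 HO0 HS0; apply: hj; rewrite h.
  by split; [exact: (O0 HO0)| left].
have hab : lin_indep2 a b.
  move=> s t hst.
  have [s0|s0] := eqVneq s 0.
    split=> //; have [//|t0] := eqVneq t 0; exfalso; apply: b_nz => i.
    have := hst i; rewrite s0 mul0r add0r => /eqP; rewrite mulf_eq0 (negPf t0) /=.
    by move/eqP.
  exfalso.
  have ea : forall i, a i = (- t / s) * b i.
    move=> i; have h' : s * a i = - (t * b i) by apply/eqP; rewrite -addr_eq0 hst.
    apply: (mulfI s0); rewrite h'; field; exact: s0.
  have [t0|t0] := eqVneq t 0.
    by apply: a_nz => i; rewrite ea t0 oppr0 !mul0r.
  apply: (nred W0 HO0 HS0); apply: (@prop_red_eq _ _ _ _ _ (- t / s)) => //.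
  - exact: prima.
  - exact: primb.
  - by rewrite mulf_neq0 ?oppr_eq0 ?invr_eq0.
apply: (infinite_gen Hu hab) => u [huO [u0 huiO]].
pose x i := a i + u * b i.
have Lx : forall f, IL f -> meval x f = 0.
  apply: (@on_line _ _ _ _ _ _ (l1*s1 + u*(l2*s2)) (l1*t1+u*(l2*t2)) HLpq) => i.
  by rewrite /x /a /b eA eB; ring.
have nzx : nonzero_vec x := indep_nonzero u hab.
split; first by split.
split; first by split => // f /XL; apply: Lx.
move=> O HO HS x' primx' [k k0 hk] redx'.
have [F [psi Hpsi]] := residue_exists HO.
have uO : u \in O := huO O HO HS.
have uiO : u^-1 \in O := huiO O HO HS.
have pu0 : psi u != 0 := psi_neq0 Hpsi uO (unit_not_max u0 uiO).
have [haO _] := prima O HO HS.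
have [hbO [jb hjb]] := primb O HO HS.
have xO : forall i, x i \in O by move=> i; apply: OD => //; apply: OM.
have px : forall i, psi (x i) = psi (a i) + psi u * psi (b i).
  move=> i; rewrite /x (psiD Hpsi) //; first by rewrite (psiM Hpsi).
  exact (OM HO uO (hbO i)).
have nored : forall e, ~ (forall i, psi (a i) = e * psi (b i)).
  by move=> e he; apply: (nred O HO HS); exact: (psi_red_eq HO Hpsi (prima O HO HS) (primb O HO HS) he).
have kO : k \in O.
  apply/negPn/negP => hk'; have hm := notO_inv_max HO hk'.
  apply: (nored (- psi u)) => i.
  have : psi (x i) = 0.
    apply/(psi0iff Hpsi (xO i)).
    have -> : x i = k^-1 * x' i by rewrite hk mulrA mulVf // mul1r.
    apply: max_idealM => //; exact: primx'.1 i.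
  by rewrite px => /eqP; rewrite addr_eq0 => /eqP ->; rewrite mulNr.
have pk0 : psi k != 0.
  apply/negP => /eqP /(psi0iff Hpsi kO) hm; have [_ [j hj]] := primx'.
  by apply: hj; rewrite hk; exact (max_idealM HO hm (xO j)).
have py : forall i, psi (x' i) = psi k * (psi (a i) + psi u * psi (b i)).
  move=> i; rewrite hk (psiM Hpsi) //; last exact: xO.
  by rewrite -px.
have Lx' : forall f, IL f -> meval x' f = 0.
  apply: (@on_line _ _ _ _ _ _ (k * (l1*s1 + u*(l2*s2))) (k * (l1*t1+u*(l2*t2))) HLpq) => i.
  by rewrite hk /x /a /b eA eB; ring.
have pb0 : psi (b jb) != 0 := psi_neq0 Hpsi (hbO jb) hjb.
have RI := redI O HO HS a b (prima O HO HS) propa (primb O HO HS) propb F psi Hpsi (fun i => psi (x' i)).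
have y1 : exists i, psi (x' i) != 0.
  have [_ [j hj]] := primx'; exists j; exact: (psi_neq0 Hpsi (primx'.1 j) hj).
have y2 : forall f, IL f -> coeffs_in O f -> mmap psi (fun i => psi (x' i)) f = 0.
  move=> f hf hc; rewrite -(psi_meval HO Hpsi) //; last exact: primx'.1.
  by rewrite (Lx' f hf) (psi0 HO Hpsi).
have y3 : forall f, ID f -> coeffs_in O f -> mmap psi (fun i => psi (x' i)) f = 0.
  move=> f hf hc; rewrite -(psi_meval HO Hpsi) //; last exact: primx'.1.
  have hm := redx' f hf hc.
  exact/(psi0iff Hpsi (max_in hm)).
case: (RI y1 y2 y3) => [[c hc]|[c hc]].
  have hb' : forall i, psi (b i) = ((c - psi k) / (psi k * psi u)) * psi (a i).
    move=> i; have h := hc i; rewrite py in h.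
    have h2 : psi k * psi u * psi (b i) = (c - psi k) * psi (a i) by rewrite mulrBl -h; ring.
    apply: (mulfI (mulf_neq0 pk0 pu0)); rewrite h2; field.
    by rewrite pk0 pu0.
  set e := (c - psi k) / (psi k * psi u) in hb'.
  have e0 : e != 0 by apply: contraNneq pb0 => e0; rewrite hb' e0 mul0r.
  apply: (nored e^-1) => i; by rewrite hb' mulrA mulVf // mul1r.
apply: (nored ((c - psi k * psi u) / psi k)) => i.
have h := hc i; rewrite py in h.
have h2 : psi k * psi (a i) = (c - psi k * psi u) * psi (b i) by rewrite mulrBl -h; ring.
apply: (mulfI pk0); rewrite h2; field; exact: pk0.
Qed.
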